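(* Let $V$ and $W$ be groups, $r\in\mathbb N$, and let $f,g\colon\mathbb ZV\to\mathbb ZW$ be $r$-strict additive homomorphisms. Then the additive homomorphism $h\colon\mathbb ZV\to\mathbb ZW$ defined by $h(e_v)=f(e_v)g(e_v)$ ($v\in V$) is $r$-strict.
   Context: $\mathbb ZV$ is the group ring with basis $e_v$, $\Delta(V)$ its augmentation ideal, $\Delta(V)^0=\mathbb ZV$. An additive homomorphism $h\colon\mathbb ZV\to\mathbb ZW$ is $r$-strict if $h(\Delta(V)^s)\subset\Delta(W)^s$ for all $s\in\mathbb N$ with $s\le r$. *)

(* Defs.v *)
(* Integral group rings ZV of arbitrary (possibly infinite)
   groups V, modelled as finitely supported functions V -> int. *)
From HB Require Import structures.
From mathcomp Require Import all_boot all_algebra.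
From mathcomp Require Import finmap.

Set Implicit Arguments.
Unset Strict Implicit.
Unset Printing Implicit Defensive.

Import GRing.Theory.
Local Open Scope fset_scope.
Local Open Scope ring_scope.

Section GroupRing.
Variable V : groupType.

Definition ZG : Type := {fsfun V -> int with 0}.

Definition ebasis (v : V) : ZG := [fsfun x in [fset v] => 1].

Definition zg0 : ZG := [fsfun x in (fset0 : {fset V}) => 0].

Definition zgadd (a b : ZG) : ZG :=
  [fsfun x in finsupp a `|` finsupp b => a x + b x].

Definition zgopp (a : ZG) : ZG := [fsfun x in finsupp a => - a x].

Definition zgmul (a b : ZG) : ZG :=
  [fsfun x in [fset (u * w)%g | u in finsupp a, w in finsupp b] =>
     \sum_(u <- finsupp a) a u * b ((u^-1) * x)%g].

Definition aug (a : ZG) : int := \sum_(v <- finsupp a) a v.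

(* augpow s x  <->  x lies in Delta(V)^s  (Delta(V)^0 = ZV);
   Delta(V)^(s+1) is the additive subgroup generated by the products a*b
   with a in Delta(V) and b in Delta(V)^s. *)
Inductive augpow : nat -> ZG -> Prop :=
| augpow_0 x : augpow 0 x
| augpow_mul s a b : aug a = 0 -> augpow s b -> augpow s.+1 (zgmul a b)
| augpow_zero s : augpow s.+1 zg0
| augpow_add s x y : augpow s.+1 x -> augpow s.+1 y -> augpow s.+1 (zgadd x y)
| augpow_opp s x : augpow s.+1 x -> augpow s.+1 (zgopp x).

End GroupRing.

Definition additive_zg (V W : groupType) (h : ZG V -> ZG W) : Prop :=
  forall a b, h (zgadd a b) = zgadd (h a) (h b).

Definition strict (V W : groupType) (r : nat) (h : ZG V -> ZG W) : Prop :=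
  forall s : nat, (s <= r)%N -> forall x, augpow s x -> augpow s (h x).

(* Main.v *)
Require Import Defs.
From HB Require Import structures.
From mathcomp Require Import all_boot all_algebra.
From mathcomp Require Import finmap zify.

Set Implicit Arguments.
Unset Strict Implicit.
Unset Printing Implicit Defensive.
Import GRing.Theory.
Local Open Scope fset_scope.
Local Open Scope ring_scope.



Section ZGring.
Variable V : groupType.
Implicit Types a b c : ZG V.

Lemma zgaddE a b (x : V) : zgadd a b x = a x + b x.
Proof.
rewrite /zgadd fsfun_fun; case: ifP => //; rewrite in_fsetU => /norP[].
by rewrite !memNfinsupp => /eqP -> /eqP ->.
Qed.

Lemma zgoppE a (x : V) : zgopp a x = - a x.
Proof.
rewrite /zgopp fsfun_fun; case: ifP => // /negbT.
by rewrite memNfinsupp => /eqP ->; rewrite oppr0.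
Qed.

Lemma zg0E (x : V) : zg0 V x = 0.
Proof. by rewrite /zg0 fsfun_fun in_fset0. Qed.

Lemma ebasisE (v x : V) : ebasis v x = (x == v)%:R.
Proof. by rewrite /ebasis fsfun_fun in_fset1; case: eqP. Qed.

Lemma zg_addA : associative (@zgadd V).
Proof. by move=> a b c; apply/fsfunP => x; rewrite !zgaddE addrA. Qed.
Lemma zg_addC : commutative (@zgadd V).
Proof. by move=> a b; apply/fsfunP => x; rewrite !zgaddE addrC. Qed.
Lemma zg_add0 : left_id (zg0 V) (@zgadd V).
Proof. by move=> a; apply/fsfunP => x; rewrite !zgaddE zg0E add0r. Qed.
Lemma zg_addN : left_inverse (zg0 V) (@zgopp V) (@zgadd V).
Proof. by move=> a; apply/fsfunP => x; rewrite !zgaddE zgoppE zg0E addNr. Qed.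

HB.instance Definition _ := Choice.on (ZG V).
HB.instance Definition _ := GRing.isZmodule.Build (ZG V) zg_addA zg_addC zg_add0 zg_addN.


Lemma supp_sub a (S : {fset V}) : (forall u, u \notin S -> a u = 0) -> finsupp a `<=` S.
Proof.
move=> H; apply/fsubsetP => u; rewrite mem_finsupp; apply: contraR => uS.
by rewrite H.
Qed.

Lemma sum_supp a (S : {fset V}) (F : V -> int) : finsupp a `<=` S ->
  \sum_(u <- S) a u * F u = \sum_(u <- finsupp a) a u * F u.
Proof.
move=> sub; rewrite (big_fset_incl _ sub) // => u _.
by rewrite memNfinsupp => /eqP ->; rewrite mul0r.
Qed.

Lemma zgmulE a b (x : V) : zgmul a b x = \sum_(u <- finsupp a) a u * b (u^-1 * x)%g.
Proof.
rewrite /zgmul fsfun_fun; case: ifP => // xI.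
rewrite big1_seq // => u /andP[_ ua].
suff -> : b (u^-1 * x)%g = 0 by rewrite mulr0.
apply/eqP; rewrite -memNfinsupp; apply: contraFN xI => ub.
by apply/imfset2P; exists u => //; exists (u^-1 * x)%g => //; rewrite mulVKg.
Qed.

Lemma zgmulE_sub a b (S : {fset V}) (x : V) : finsupp a `<=` S ->
  zgmul a b x = \sum_(u <- S) a u * b (u^-1 * x)%g.
Proof. by move=> sub; rewrite zgmulE (@sum_supp a S (fun u => b (u^-1 * x)%g) sub). Qed.

Definition prodset a b : {fset V} :=
  [fset (u * w)%g | u in finsupp a, w in finsupp b].

Lemma supp_mul a b : finsupp (zgmul a b) `<=` prodset a b.
Proof. by apply: supp_sub => u uI; rewrite /zgmul fsfun_fun (negbTE uI). Qed.

Lemma zg_mulA : associative (@zgmul V).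
Proof.
move=> a b c; apply/fsfunP => x; symmetry.
rewrite (zgmulE_sub _ _ (supp_mul a b)).
under eq_bigr => u _ do rewrite zgmulE big_distrl /=.
rewrite exchange_big /= zgmulE big_seq [RHS]big_seq; apply: eq_bigr => t ta.
rewrite zgmulE big_distrr /=.
have sub : [fset (t * w)%g | w in finsupp b] `<=` prodset a b.
  apply/fsubsetP => u /imfsetP [w wb ->].
  by apply/imfset2P; exists t => //; exists w.
rewrite -(big_fset_incl _ sub); last first.
  move=> u _ uN; suff -> : b (t^-1 * u)%g = 0 by rewrite mulr0 mul0r.
  apply/eqP; rewrite -memNfinsupp; move: uN; apply: contra => ub.
  by apply/imfsetP; exists (t^-1 * u)%g => //; rewrite mulVKg.
rewrite big_imfset /=; last by move=> w1 w2 _ _; apply: mulgI.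
by apply: eq_bigr => w _; rewrite mulKg invgM mulgA mulrA.
Qed.

Lemma zg_mulDl : left_distributive (@zgmul V) (@zgadd V).
Proof.
move=> a b c; apply/fsfunP => x.
have sa : finsupp a `<=` finsupp a `|` finsupp b by apply: fsubsetUl.
have sb : finsupp b `<=` finsupp a `|` finsupp b by apply: fsubsetUr.
have sab : finsupp (zgadd a b) `<=` finsupp a `|` finsupp b.
  apply: supp_sub => u; rewrite in_fsetU => /norP[].
  by rewrite zgaddE !memNfinsupp => /eqP -> /eqP ->; rewrite addr0.
rewrite zgaddE (zgmulE_sub _ _ sab) (zgmulE_sub _ _ sa) (zgmulE_sub _ _ sb).
by rewrite -big_split /=; apply: eq_bigr => u _; rewrite zgaddE mulrDl.
Qed.

Lemma zg_mulDr : right_distributive (@zgmul V) (@zgadd V).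
Proof.
move=> a b c; apply/fsfunP => x.
rewrite zgaddE !zgmulE -big_split /=.
by apply: eq_bigr => u _; rewrite zgaddE mulrDr.
Qed.

Definition zg1 : ZG V := ebasis 1%g.

Lemma supp_e (v : V) : finsupp (ebasis v) `<=` [fset v].
Proof.
apply: supp_sub => u; rewrite in_fset1 ebasisE => /negbTE -> //.
Qed.

Lemma zg_mul1 : left_id zg1 (@zgmul V).
Proof.
move=> a; apply/fsfunP => x.
by rewrite (zgmulE_sub _ _ (supp_e _)) big_seq_fset1 ebasisE eqxx mul1r invg1 mul1g.
Qed.

Lemma zg_mul1r : right_id zg1 (@zgmul V).
Proof.
move=> a; apply/fsfunP => x.
have s1 : finsupp a `<=` finsupp a `|` [fset x] by apply: fsubsetUl.
have s2 : [fset x] `<=` finsupp a `|` [fset x] by apply: fsubsetUr.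
rewrite (zgmulE_sub _ _ s1) -(big_fset_incl _ s2); last first.
  move=> u _; rewrite in_fset1 => ux; rewrite ebasisE.
  suff -> : (u^-1 * x == 1)%g = false by rewrite mulr0.
  apply: contraNF ux => /eqP e; apply/eqP.
  by rewrite -[x](mulVKg u) e mulg1.
by rewrite big_seq_fset1 ebasisE mulVg eqxx mulr1.
Qed.

Lemma zg_one_neq0 : zg1 != 0.
Proof.
apply/eqP => e; change (0 : ZG V) with (zg0 V) in e.
by have := congr1 (fun f : ZG V => f 1%g) e; rewrite /= /zg1 ebasisE zg0E eqxx.
Qed.

HB.instance Definition _ := GRing.Zmodule_isNzRing.Build (ZG V)
  zg_mulA zg_mul1 zg_mul1r zg_mulDl zg_mulDr zg_one_neq0.

Lemma zgmul_mul a b : zgmul a b = a * b. Proof. by []. Qed.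
Lemma zgadd_add a b : zgadd a b = a + b. Proof. by []. Qed.
Lemma zgopp_opp a : zgopp a = - a. Proof. by []. Qed.
Lemma zg0_0 : zg0 V = 0. Proof. by []. Qed.

Lemma augE_sub a (S : {fset V}) : finsupp a `<=` S -> aug a = \sum_(u <- S) a u.
Proof.
move=> sub; rewrite /aug (big_fset_incl _ sub) // => u _.
by rewrite memNfinsupp => /eqP.
Qed.

Lemma augD a b : aug (a + b) = aug a + aug b.
Proof.
have sa : finsupp a `<=` finsupp a `|` finsupp b by apply: fsubsetUl.
have sb : finsupp b `<=` finsupp a `|` finsupp b by apply: fsubsetUr.
have sab : finsupp (zgadd a b) `<=` finsupp a `|` finsupp b.
  apply: supp_sub => u; rewrite in_fsetU => /norP[].
  by rewrite zgaddE !memNfinsupp => /eqP -> /eqP ->; rewrite addr0.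
rewrite (augE_sub sab) (augE_sub sa) (augE_sub sb) -big_split /=.
by apply: eq_bigr => u _; rewrite zgaddE.
Qed.

Lemma aug0 : aug (0 : ZG V) = 0.
Proof.
have s0 : finsupp (0 : ZG V) `<=` fset0 by apply: supp_sub => u _; apply: zg0E.
by rewrite (augE_sub s0) big_seq_fset0.
Qed.

Lemma augN a : aug (- a) = - aug a.
Proof. by apply: (addrI (aug a)); rewrite -augD !addrN aug0. Qed.

Lemma augB a b : aug (a - b) = aug a - aug b.
Proof. by rewrite augD augN. Qed.

Lemma aug_e (v : V) : aug (ebasis v) = 1.
Proof. by rewrite (augE_sub (supp_e v)) big_seq_fset1 ebasisE eqxx. Qed.

Lemma augM a b : aug (a * b) = aug a * aug b.
Proof.
rewrite (augE_sub (supp_mul a b)) /aug big_distrl /=.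
under eq_bigr => x _ do rewrite zgmulE.
rewrite exchange_big /= big_seq [RHS]big_seq; apply: eq_bigr => t ta.
rewrite -big_distrr /=; congr (_ * _).
have sub : [fset (t * w)%g | w in finsupp b] `<=` prodset a b.
  apply/fsubsetP => u /imfsetP [w wb ->].
  by apply/imfset2P; exists t => //; exists w.
rewrite -(big_fset_incl _ sub); last first.
  move=> u _ uN; apply/eqP; rewrite -memNfinsupp; move: uN; apply: contra => ub.
  by apply/imfsetP; exists (t^-1 * u)%g => //; rewrite mulVKg.
rewrite big_imfset /=; last by move=> w1 w2 _ _; apply: mulgI.
by apply: eq_bigr => w _; rewrite mulKg.
Qed.

Lemma augpow0 s : augpow s (0 : ZG V).
Proof. by case: s => [|s]; [apply: augpow_0 | apply: augpow_zero]. Qed.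

Lemma augpowD s x y : augpow s x -> augpow s y -> augpow s (x + y).
Proof. by case: s => [|s] hx hy; [apply: augpow_0 | apply: augpow_add]. Qed.

Lemma augpowN s x : augpow s x -> augpow s (- x).
Proof. by case: s => [|s] hx; [apply: augpow_0 | apply: augpow_opp]. Qed.

Lemma augpowB s x y : augpow s x -> augpow s y -> augpow s (x - y).
Proof. by move=> hx hy; apply: augpowD => //; apply: augpowN. Qed.

Lemma augpow_sum s (I : Type) (l : seq I) (F : I -> ZG V) :
  (forall i, augpow s (F i)) -> augpow s (\sum_(i <- l) F i).
Proof.
move=> H; elim: l => [|i l IH]; first by rewrite big_nil; apply: augpow0.
by rewrite big_cons; apply: augpowD.
Qed.

Lemma augpowMz s x (c : int) : augpow s x -> augpow s (x *~ c).
Proof.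
move=> hx; have hn : forall n, augpow s (x *+ n).
  elim=> [|n IH]; first by rewrite mulr0n; apply: augpow0.
  by rewrite mulrS; apply: augpowD.
by case: c => n; rewrite ?NegzE ?mulrNz; [|apply: augpowN]; apply: hn.
Qed.

Lemma augpow_le s (x : ZG V) : augpow s x -> forall k, (k <= s)%N -> augpow k x.
Proof.
elim=> {s x} [x|s a b ha hb IH|s|s x y _ IHx _ IHy|s x _ IH] k ks.
- by rewrite leqn0 in ks; move/eqP: ks => ->; apply: augpow_0.
- case: k ks => [|k] ks; first exact: augpow_0.
  by apply: augpow_mul => //; apply: IH.
- exact: augpow0.
- by apply: augpowD; [apply: IHx | apply: IHy].
- by apply: augpowN; apply: IH.
Qed.

Lemma augpow_lideal s (b : ZG V) : augpow s b -> forall a, augpow s (a * b).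
Proof.
elim=> {s b} [b|s c b hc hb IH|s|s x y _ IHx _ IHy|s x _ IH] a.
- exact: augpow_0.
- rewrite zgmul_mul mulrA; apply: augpow_mul => //.
  by rewrite augM hc mulr0.
- by rewrite zg0_0 mulr0; apply: augpow0.
- by rewrite zgadd_add mulrDr; apply: augpowD.
- by rewrite zgopp_opp mulrN; apply: augpowN.
Qed.

Lemma augpow_mulr i (a : ZG V) : augpow i a -> forall j b, augpow j b -> augpow (i + j) (a * b).
Proof.
elim=> {i a} [a|s c a hc ha IH|s|s x y _ IHx _ IHy|s x _ IH] j b hb.
- by rewrite add0n; apply: augpow_lideal.
- rewrite zgmul_mul -mulrA addSn; apply: augpow_mul => //; exact: IH.
- by rewrite zg0_0 mul0r; apply: augpow0.
- by rewrite zgadd_add mulrDl; apply: augpowD; [apply: IHx | apply: IHy].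
- by rewrite zgopp_opp mulNr; apply: augpowN; apply: IH.
Qed.

End ZGring.



Section Gen.
Variable V : groupType.
Implicit Types a b c x y : ZG V.


Definition gen (vs : seq V) (w : V) : ZG V :=
  foldr (fun v y => (ebasis v - 1) * y) (ebasis w) vs.

Lemma aug_e1 (v : V) : aug (ebasis v - 1) = 0.
Proof. by rewrite augB aug_e; rewrite (aug_e 1%g) subrr. Qed.

Lemma augpow_gen vs w : augpow (size vs) (gen vs w).
Proof.
elim: vs => [|v vs IH] /=; first exact: augpow_0.
exact: (augpow_mul (aug_e1 v) IH).
Qed.

Fixpoint expand (vs : seq V) (w : V) : seq (int * V) :=
  match vs with
  | [::] => [:: (1%Z, w)]
  | v :: vs' => [seq (cp.1, (v * cp.2)%g) | cp <- expand vs' w] ++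
                [seq (- cp.1, cp.2) | cp <- expand vs' w]
  end.

Lemma e_mul (u v : V) : ebasis u * ebasis v = ebasis (u * v)%g.
Proof.
apply/fsfunP => x; rewrite -zgmul_mul (zgmulE_sub _ _ (supp_e u)) big_seq_fset1.
rewrite !ebasisE eqxx mul1r; congr ((_ : bool)%:R).
apply/eqP/eqP => [<-|->]; first by rewrite mulVKg.
by rewrite mulKg.
Qed.

Lemma gen_expand vs w : gen vs w = \sum_(cp <- expand vs w) ebasis cp.2 *~ cp.1.
Proof.
elim: vs => [|v vs IH] /=; first by rewrite big_cons big_nil addr0.
rewrite IH big_cat !big_map /= mulrBl mul1r mulr_sumr; congr (_ + _).
  by apply: eq_bigr => cp _; rewrite mulrzAr e_mul.
by rewrite -sumrN; apply: eq_bigr => cp _; rewrite mulrNz.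
Qed.

Lemma eval_sum (I : Type) (l : seq I) (F : I -> ZG V) (t : V) :
  (\sum_(i <- l) F i) t = \sum_(i <- l) F i t.
Proof.
elim: l => [|i l IH]; first by rewrite !big_nil zg0E.
by rewrite !big_cons -zgadd_add zgaddE IH.
Qed.

Lemma eval_Mz x (c : int) (t : V) : (x *~ c) t = x t * c.
Proof.
have hn : forall n, (x *+ n) t = x t *+ n.
  elim=> [|n IH]; first by rewrite !mulr0n zg0E.
  by rewrite !mulrS -zgadd_add zgaddE IH.
case: c => n; first by rewrite hn -mulr_natr natz.
by rewrite NegzE mulrNz -zgopp_opp zgoppE hn mulrN -mulr_natr natz.
Qed.

Lemma decomp x : x = \sum_(u <- finsupp x) ebasis u *~ x u.
Proof.
apply/fsfunP => t; rewrite eval_sum.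
under eq_bigr => u _ do rewrite eval_Mz ebasisE.
have s1 : finsupp x `<=` finsupp x `|` [fset t] by apply: fsubsetUl.
have s2 : [fset t] `<=` finsupp x `|` [fset t] by apply: fsubsetUr.
rewrite (big_fset_incl _ s1); last first.
  by move=> u _; rewrite memNfinsupp => /eqP ->; rewrite mulr0.
rewrite -(big_fset_incl _ s2); last first.
  by move=> u _; rewrite in_fset1 eq_sym => /negbTE ->; rewrite mul0r.
by rewrite big_seq_fset1 eqxx mul1r.
Qed.

Inductive span (s : nat) : ZG V -> Prop :=
| sp0 : span s 0
| spD x y : span s x -> span s y -> span s (x + y)
| spN x : span s x -> span s (- x)
| spG vs w : size vs = s -> span s (gen vs w).

Lemma spanMz s x (c : int) : span s x -> span s (x *~ c).
Proof.
move=> hx; have hn : forall n, span s (x *+ n).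
  elim=> [|n IH]; first by rewrite mulr0n; apply: sp0.
  by rewrite mulrS; apply: spD.
by case: c => n; rewrite ?NegzE ?mulrNz; [|apply: spN]; apply: hn.
Qed.

Lemma span_sum s (I : Type) (l : seq I) (F : I -> ZG V) :
  (forall i, span s (F i)) -> span s (\sum_(i <- l) F i).
Proof.
move=> H; elim: l => [|i l IH]; first by rewrite big_nil; apply: sp0.
by rewrite big_cons; apply: spD.
Qed.

Lemma sum_Mz (I : Type) (l : seq I) (F : I -> int) (y : ZG V) :
  \sum_(i <- l) y *~ F i = y *~ \sum_(i <- l) F i.
Proof.
elim: l => [|i l IH]; first by rewrite !big_nil.
by rewrite !big_cons IH mulrzDr.
Qed.

Lemma decomp_aug a : aug a = 0 ->
  a = \sum_(u <- finsupp a) (ebasis u - 1) *~ a u.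
Proof.
move=> ha; under eq_bigr => u _ do rewrite mulrzBl.
rewrite sumrB -decomp.
suff -> : \sum_(i <- finsupp a) (1 : ZG V) *~ a i = 0 by rewrite subr0.
by rewrite sum_Mz -/(aug a) ha mulr0z.
Qed.

Lemma span_mul s a b : aug a = 0 -> span s b -> span s.+1 (a * b).
Proof.
move=> ha; elim=> {b} [|x y _ IHx _ IHy|x _ IH|vs w sz].
- by rewrite mulr0; apply: sp0.
- by rewrite mulrDr; apply: spD.
- by rewrite mulrN; apply: spN.
- rewrite (decomp_aug ha) mulr_suml; apply: span_sum => u.
  by rewrite mulrzAl; apply: spanMz; apply: (@spG _ (u :: vs) w) => /=; rewrite sz.
Qed.

Lemma augpow_span s x : augpow s x -> span s x.
Proof.
elim=> {s x} [x|s a b ha hb IH|s|s x y _ IHx _ IHy|s x _ IH].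
- rewrite (decomp x); apply: span_sum => u; apply: spanMz.
  exact: (@spG _ [::] u).
- exact: span_mul.
- exact: sp0.
- exact: spD.
- exact: spN.
Qed.

End Gen.



Section Key.
Variables V W : groupType.

Definition sumF (F : V -> ZG W) (l : seq (int * V)) : ZG W :=
  \sum_(cp <- l) F cp.2 *~ cp.1.

Lemma sumF_cons (v : V) vs w (H : V -> ZG W) :
  sumF H (expand (v :: vs) w) =
  sumF (fun p => H (v * p)%g) (expand vs w) - sumF H (expand vs w).
Proof.
rewrite /sumF /= big_cat !big_map /=; congr (_ + _).
by rewrite -sumrN; apply: eq_bigr => cp _; rewrite mulrNz.
Qed.

Lemma sumF_sub (H K : V -> ZG W) l :
  sumF H l - sumF K l = sumF (fun p => H p - K p) l.
Proof. by rewrite /sumF -sumrB; apply: eq_bigr => cp _; rewrite mulrzBl. Qed.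

Lemma sumF_add (H K : V -> ZG W) l :
  sumF H l + sumF K l = sumF (fun p => H p + K p) l.
Proof. by rewrite /sumF -big_split; apply: eq_bigr => cp _; rewrite mulrzDl. Qed.

Lemma expand_conj (v : V) vs w :
  [seq (cp.1, (v * cp.2)%g) | cp <- expand vs w] =
  expand [seq (v * u * v^-1)%g | u <- vs] (v * w)%g.
Proof.
elim: vs => [|u vs IH] //=.
rewrite map_cat -IH -!map_comp; congr (_ ++ _); apply: eq_map => cp /=.
by rewrite !mulgA mulgVK.
Qed.

Lemma sumF_conj (v : V) vs w (H : V -> ZG W) :
  sumF (fun p => H (v * p)%g) (expand vs w) =
  sumF H (expand [seq (v * u * v^-1)%g | u <- vs] (v * w)%g).
Proof. by rewrite -expand_conj /sumF big_map. Qed.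

Lemma key vs : forall w (F G : V -> ZG W) a b rf rg,
  (forall vs w, (size vs + a <= rf)%N -> augpow (size vs + a) (sumF F (expand vs w))) ->
  (forall vs w, (size vs + b <= rg)%N -> augpow (size vs + b) (sumF G (expand vs w))) ->
  (size vs + a <= rf)%N -> (size vs + b <= rg)%N ->
  augpow (size vs + a + b) (sumF (fun p => F p * G p) (expand vs w)).
Proof.
elim: vs => [|v vs IH] w F G a b rf rg HF HG ha hb.
  have := HF [::] w ha; have := HG [::] w hb.
  rewrite /sumF /= !big_cons !big_nil !addr0 /= !add0n => hG hF.
  exact: augpow_mulr.
move: ha hb => /= ha hb; rewrite sumF_cons sumF_sub.
set F1 := fun p => F (v * p)%g - F p.
set G1 := fun p => G (v * p)%g.
set G2 := fun p => G (v * p)%g - G p.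
rewrite (_ : sumF _ _ = sumF (fun p => F1 p * G1 p + F p * G2 p) (expand vs w)); last first.
  by apply: eq_bigr => cp _; rewrite /F1 /G1 /G2 mulrBl mulrBr addrA subrK.
rewrite -sumF_add; apply: augpowD.
- have -> : (size (v :: vs) + a + b = size vs + a.+1 + b)%N by rewrite /=; lia.
  apply: (IH _ _ _ _ _ rf rg) => /=; try lia.
  + move=> vs' w' h; rewrite /F1 -sumF_sub -sumF_cons.
    have -> : (size vs' + a.+1 = size (v :: vs') + a)%N by rewrite /=; lia.
    by apply: HF => /=; lia.
  + by move=> vs' w' h; rewrite /G1 sumF_conj; have := HG [seq (v * u * v^-1)%g | u <- vs'] (v * w')%g; rewrite size_map; apply.
- have -> : (size (v :: vs) + a + b = size vs + a + b.+1)%N by rewrite /=; lia.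
  apply: (IH _ _ _ _ _ rf rg) => //=; try lia.
  move=> vs' w' h; rewrite /G2 -sumF_sub -sumF_cons.
  have -> : (size vs' + b.+1 = size (v :: vs') + b)%N by rewrite /=; lia.
  by apply: HG => /=; lia.
Qed.

End Key.

Section Main.
Variables V W : groupType.

Lemma addit_sumF (h : ZG V -> ZG W) : additive_zg h -> forall vs w,
  h (gen vs w) = sumF (fun p => h (ebasis p)) (expand vs w).
Proof.
move=> hD; have hD' : forall a b, h (a + b) = h a + h b := hD.
have h0 : h 0 = 0.
  by apply: (addrI (h 0)); rewrite -hD' !addr0.
have hN : forall a, h (- a) = - h a.
  by move=> a; apply: (addrI (h a)); rewrite -hD' !subrr.
have hMz : forall a (c : int), h (a *~ c) = h a *~ c.
  move=> a c; have hn : forall n, h (a *+ n) = h a *+ n.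
    by elim=> [|n IH]; rewrite ?mulr0n // mulrS hD' IH mulrS.
  by case: c => n; rewrite ?NegzE ?mulrNz ?hN hn.
move=> vs w; rewrite gen_expand /sumF.
elim: (expand vs w) => [|cp l IH]; first by rewrite !big_nil.
by rewrite !big_cons hD' IH hMz.
Qed.

Lemma addit_span (h : ZG V -> ZG W) s : additive_zg h ->
  (forall vs w, size vs = s -> augpow s (h (gen vs w))) ->
  forall x, span s x -> augpow s (h x).
Proof.
move=> hD hg; have hD' : forall a b, h (a + b) = h a + h b := hD.
have h0 : h 0 = 0.
  by apply: (addrI (h 0)); rewrite -hD' !addr0.
have hN : forall a, h (- a) = - h a.
  by move=> a; apply: (addrI (h a)); rewrite -hD' !subrr.
move=> x; elim=> {x} [|x y _ IHx _ IHy|x _ IH|vs w sz].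
- by rewrite h0; apply: augpow0.
- by rewrite hD'; apply: augpowD.
- by rewrite hN; apply: augpowN.
- exact: hg.
Qed.

End Main.

Theorem mainTheorem7 (V W : groupType) (r : nat) (f g h : ZG V -> ZG W) :
  additive_zg f -> additive_zg g -> strict r f -> strict r g ->
  additive_zg h ->
  (forall v : V, h (ebasis v) = zgmul (f (ebasis v)) (g (ebasis v))) ->
  strict r h.
Proof.
move=> fD gD sf sg hD hb s sr x /augpow_span hx.
apply: (addit_span hD _ hx) => vs w sz.
rewrite (addit_sumF hD).
rewrite (_ : sumF _ _ = sumF (fun p => f (ebasis p) * g (ebasis p)) (expand vs w)); last first.
  by apply: eq_bigr => cp _; rewrite hb.
have HF : forall vs' w', (size vs' + 0 <= r)%N ->
    augpow (size vs' + 0) (sumF (fun p => f (ebasis p)) (expand vs' w')).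
  move=> vs' w'; rewrite addn0 => le; rewrite -addit_sumF //.
  by apply: sf => //; exact: augpow_gen.
have HG : forall vs' w', (size vs' + 0 <= r)%N ->
    augpow (size vs' + 0) (sumF (fun p => g (ebasis p)) (expand vs' w')).
  move=> vs' w'; rewrite addn0 => le; rewrite -addit_sumF //.
  by apply: sg => //; exact: augpow_gen.
have := @key V W vs w _ _ 0 0 r r HF HG.
by rewrite !addn0 sz; apply.
Qed.
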